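(* The fertility map $\Phi\colon\mathcal{A}T\to\mathcal{A}M_{-1}$ is a morphism of pre-Lie-Rinehart algebras: its restriction $\Phi\colon\mathcal A\to S(M_0)$ is a unital algebra morphism, and for all $X,Y\in\mathcal{A}T$ and $\mathbf a\in\mathcal A$ one has $\Phi(X\curvearrowright Y)=\Phi(X)\rhd\Phi(Y)$, $\Phi(\mathbf aX)=\Phi(\mathbf a)\odot\Phi(X)$, and $\Phi(\rho(X)\mathbf a)=\rho(\Phi(X))(\Phi(\mathbf a))$.
   Context: Fix a field $\mathbb K$ and a finite set $C$ of decorations. Trees side. An aromatic tree is a finite directed graph $(V,E)$ whose vertices carry decorations $d(v)\in C$, in which every vertex has exactly one outgoing edge except one vertex, the root, which has none; it is considered up to decoration-preserving isomorphism. The connected component of the root is a (rooted) tree; the other components are aromas (connected graphs in which every vertex has exactly one outgoing edge; each contains exactly one directed cycle). Let $T$ be the span of trees, $A_0$ the span of aromas, $\mathcal A=S(A_0)$ the symmetric algebra (multiaromas, product written by juxtaposition), and $\mathcal AT=\mathcal A\otimes T$ the span of aromatic trees $\mathbf a\tau$. The fertility $f(v)$ of a vertex is the number of edges ending at $v$. Grafting: for a tree $\tau_1$ and a tree or aroma $x$, $\tau_1\curvearrowright x$ is the sum over vertices $v$ of $x$ of the graph obtained by adding an edge from the root of $\tau_1$ to $v$; on multiaromas $\tau\curvearrowright(a^1\cdots a^m)=\sum_i a^1\cdots(\tau\curvearrowright a^i)\cdots a^m$; on aromatic trees $(\mathbf a_1\tau_1)\curvearrowright(\mathbf a_2\tau_2)=\mathbf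 a_1\mathbf a_2(\tau_1\curvearrowright\tau_2)+\mathbf a_1(\tau_1\curvearrowright\mathbf a_2)\tau_2$. The anchor is $\rho(\mathbf a_1\tau_1)(\mathbf a)=\mathbf a_1(\tau_1\curvearrowright\mathbf a)$. (With these, $\mathcal AT$ is a pre-Lie-Rinehart algebra over $\mathcal A$.) Multi-index side. $\overline N(C)$ is the polynomial algebra over $\mathbb K$ in variables $x^a_j$, $a\in C$, $j\ge -1$; monomials $x^{\mathbf k}=\prod(x^a_j)^{k^a_j}$ have weight $\sum j k^a_j$; $\partial$ is the derivation with $\partial x^a_j=x^a_{j+1}$; $M_n$ is the span of monomials of weight $n$ ($n=-1,0$; non-constant for $n=0$). $S(V)$ is the symmetric algebra with product $\odot$; $\mathcal AM_{-1}=S(M_0)\otimes M_{-1}$. The product $\rhd$: for monomials $x^{\mathbf k}\in M_{-1}$ and $P\in M_0\cup M_{-1}$, $x^{\mathbf k}\rhd P=x^{\mathbf k}\partial P$; $x^{\mathbf k}\rhd(x^{\kappa^1}\odot\cdots\odot x^{\kappa^m})=\sum_i x^{\kappa^1}\odot\cdots\odot(x^{\mathbf k}\rhd x^{\kappa^i})\odot\cdots\odot x^{\kappa^m}$; $(\mathbf y^1\odot x^{\mathbf k})\rhd\mathbf y=\mathbf y^1\odot(x^{\mathbf k}\rhd\mathbf y)$; $(\mathbf y^1\odot x^{\mathbf k^1})\rhd(\mathbf y^2\odot x^{\mathbf k^2})=\mathbf y^1\odot(x^{\mathbf k^1}\rhd\mathbf y^2)\odot x^{\mathbf k^2}+\mathbf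 y^1\odot\mathbf y^2\odot(x^{\mathbf k^1}\rhd x^{\mathbf k^2})$. The anchor is $\rho(X)(\mathbf y)=X\rhd\mathbf y$. Fertility map: for a tree $t$, $\Phi(t)=\prod_{v}x^{d(v)}_{f(v)-1}\in M_{-1}$; for an aroma $a$, $\Phi(a)=\prod_v x^{d(v)}_{f(v)-1}\in M_0$; $\Phi(a^1\cdots a^nt)=\Phi(a^1)\odot\cdots\odot\Phi(a^n)\odot\Phi(t)$, extended linearly. *)

(* Defs.v *)
From HB Require Import structures.
From mathcomp Require Import all_boot all_algebra.
From mathcomp Require Import finmap.
From mathcomp Require Import generic_quotient.
From mathcomp.multinomials Require Import monalg.

Set Implicit Arguments.
Unset Strict Implicit.
Unset Printing Implicit Defensive.

Import GRing.Theory.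
Local Open Scope ring_scope.
Local Open Scope quotient_scope.

Section LinExt.
Variable K : fieldType.

Definition linext (T : choiceType) (V : lmodType K) (f : T -> V)
    (x : {malg K[T]}) : V :=
  \sum_(k <- msupp x) x@_k *: f k.

Definition linext2 (T U : choiceType) (V : lmodType K) (f : T -> U -> V)
    (x : {malg K[T]}) (y : {malg K[U]}) : V :=
  \sum_(k <- msupp x) \sum_(l <- msupp y) (x@_k * y@_l) *: f k l.
End LinExt.

(* Decorated graphs: vertex set 'I_n, each vertex has at most one   *)
(* outgoing edge (its successor), and a decoration in C.            *)
Section Graphs.
Variable C : finType.

Definition dgraph := {n : nat & {ffun 'I_n -> option 'I_n * C}}.

Definition gsucc (g : dgraph) (v : 'I_(tag g)) : option 'I_(tag g) :=
  (tagged g v).1.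
Definition gdeco (g : dgraph) (v : 'I_(tag g)) : C := (tagged g v).2.
Arguments gsucc : clear implicits.
Arguments gdeco : clear implicits.

Definition giso (g h : dgraph) : bool :=
  [exists f : {ffun 'I_(tag g) -> 'I_(tag h)},
    [&& injectiveb f, tag g == tag h &
      [forall i, tagged h (f i) == (omap f (tagged g i).1, (tagged g i).2)]]].

Lemma giso_refl : reflexive giso.
Proof.
move=> g; apply/existsP; exists [ffun i => i]; apply/and3P; split=> //.
  by apply/injectiveP=> i j; rewrite !ffunE.
apply/forallP=> i; rewrite ffunE; case: (tagged g i) => [[s|] c] //=.
by rewrite ffunE.
Qed.

Lemma giso_trans : transitive giso.
Proof.
move=> h g k /existsP[f1 /and3P[/injectiveP i1 /eqP e1 /forallP h1]].
move=> /existsP[f2 /and3P[/injectiveP i2 /eqP e2 /forallP h2]].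
apply/existsP; exists [ffun i => f2 (f1 i)]; apply/and3P; split.
- by apply/injectiveP=> i j; rewrite !ffunE => /i2 /i1.
- by rewrite -e2 e1.
apply/forallP=> i; rewrite ffunE (eqP (h2 _)) (eqP (h1 _)) /=.
by case: (tagged g i) => [[s|] c] //=; rewrite ffunE.
Qed.

Lemma giso_sym : symmetric giso.
Proof.
suff S g h : giso g h -> giso h g by move=> g h; apply/idP/idP; apply: S.
move=> /existsP[f /and3P[/injectiveP fi /eqP e /forallP hf]].
have cf : (#|'I_(tag h)| <= #|'I_(tag g)|)%N by rewrite !card_ord e.
have [f' fK f'K] := inj_card_bij fi cf.
apply/existsP; exists [ffun j => f' j]; apply/and3P; split.
- by apply/injectiveP=> i j; rewrite !ffunE => /(can_inj f'K).
- by rewrite e.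
apply/forallP=> j; rewrite ffunE.
have := eqP (hf (f' j)); rewrite f'K => ->.
case: (tagged g (f' j)) => [[s|] c] //=.
by rewrite ffunE fK.
Qed.

Canonical giso_equiv := EquivRel giso giso_refl giso_sym giso_trans.

Definition graphc := {eq_quot giso}.

Definition fert (g : dgraph) (v : 'I_(tag g)) : nat :=
  #|[pred u | gsucc g u == Some v]|.
Arguments fert : clear implicits.

Definition gadj (g : dgraph) : rel 'I_(tag g) :=
  fun u v => (gsucc g u == Some v) || (gsucc g v == Some u).

Definition gconnected (g : dgraph) : bool :=
  [forall u, forall v, connect (@gadj g) u v].

Definition istree (g : dgraph) : bool :=
  (#|[pred v | gsucc g v == None]| == 1%N) && gconnected g.

Definition isaroma (g : dgraph) : bool :=
  [&& (0 < tag g)%N, [forall v, gsucc g v != None] & gconnected g].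

(* grafting: edge from the root of t to the vertex v of x;
   vertices of t come first, then those of x *)
Definition graft_at (t x : dgraph) (v : 'I_(tag x)) : dgraph :=
  existT _ (tag t + tag x)%N
    [ffun k : 'I_(tag t + tag x) =>
       match split k with
       | inl i => (Some (if gsucc t i is Some j then lshift (tag x) j
                         else @rshift (tag t) (tag x) v), gdeco t i)
       | inr j => (omap (@rshift (tag t) (tag x)) (gsucc x j), gdeco x j)
       end].

End Graphs.
Arguments gsucc {C} g v.
Arguments gdeco {C} g v.
Arguments fert {C} g v.

Section Classes.
Variable C : finType.

Definition Tree := {x : graphc C | istree (repr x)}.
Definition Aroma := {x : graphc C | isaroma (repr x)}.

Variable K : fieldType.

Definition tree_cls (g : dgraph C) : {malg K[Tree]} :=
  if insub (\pi_(graphc C) g) is Some t then << t >> else 0.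
Definition aroma_cls (g : dgraph C) : {malg K[Aroma]} :=
  if insub (\pi_(graphc C) g) is Some a then << a >> else 0.

Definition graft_tt (t1 t2 : Tree) : {malg K[Tree]} :=
  \sum_(v : 'I_(tag (repr (val t2)))) tree_cls (graft_at (repr (val t1)) v).
Definition graft_ta (t : Tree) (a : Aroma) : {malg K[Aroma]} :=
  \sum_(v : 'I_(tag (repr (val a)))) aroma_cls (graft_at (repr (val t)) v).

(* multiaromas A = S(A_0), aromatic trees AT = A (x) T *)
Definition MA := {malg K[{cmonom Aroma}]}.
Definition AT := {malg K[({cmonom Aroma} * Tree)%type]}.

Definition at_of (a : MA) (t : {malg K[Tree]}) : AT :=
  linext2 (fun m tau => << (m, tau) >> : AT) a t.

Definition actA (a : MA) (X : AT) : AT :=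
  linext2 (fun m1 (p : {cmonom Aroma} * Tree) =>
             << (mulcm m1 p.1, p.2) >> : AT) a X.

(* tau ~> (a^1 ... a^m) = sum_i a^1 ... (tau ~> a^i) ... a^m *)
Definition liftA (x : {malg K[Aroma]}) : MA :=
  linext (fun al => << ucm al >> : MA) x.
Definition graft_tA (t : Tree) (a : MA) : MA :=
  linext (fun m : {cmonom Aroma} =>
     \sum_(al <- finsupp m) (m al)%:R *:
        (<< divcm m (ucm al) >> * liftA (graft_ta t al))) a.

Definition graftAT (X Y : AT) : AT :=
  linext2 (fun (p1 p2 : {cmonom Aroma} * Tree) =>
    at_of << mulcm p1.1 p2.1 >> (graft_tt p1.2 p2.2)
    + at_of (<< p1.1 >> * graft_tA p1.2 << p2.1 >>) << p2.2 >>) X Y.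

Definition anchorAT (X : AT) (a : MA) : MA :=
  linext2 (fun (p : {cmonom Aroma} * Tree) (m : {cmonom Aroma}) =>
    << p.1 >> * graft_tA p.2 << m >>) X a.

End Classes.

Section MultiIndex.
Variable C : finType.
Variable K : fieldType.

(* monomials of N(C): the variable x^a_j (a in C, j >= -1) is encoded as
   ucm (a, j+1) *)
Definition Mon := {cmonom (C * nat)%type}.
Definition Npoly := {malg K[Mon]}.

Definition dmon (m : Mon) : Npoly :=
  \sum_(i <- finsupp m) (m i)%:R *:
     << mulcm (divcm m (ucm i)) (ucm (i.1, i.2.+1)) >>.
Definition deriv (P : Npoly) : Npoly := linext dmon P.

(* the symmetric algebra S(V) on the span V of monomials, product (.) *)
Definition SM := {malg K[{cmonom Mon}]}.
Definition emb1 (P : Npoly) : SM := linext (fun m : Mon => << ucm m >> : SM) P.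

Definition dS (k : Mon) (y : SM) : SM :=
  linext (fun mu : {cmonom Mon} =>
    \sum_(p <- finsupp mu) (mu p)%:R *:
       (<< divcm mu (ucm p) >> * emb1 (<< k >> * deriv << p >>))) y.

Definition AM := {malg K[({cmonom Mon} * Mon)%type]}.

Definition am_of (y : SM) (P : Npoly) : AM :=
  linext2 (fun (mu : {cmonom Mon}) (k : Mon) => << (mu, k) >> : AM) y P.

Definition actAM (y : SM) (Z : AM) : AM :=
  linext2 (fun (mu : {cmonom Mon}) (p : {cmonom Mon} * Mon) =>
             << (mulcm mu p.1, p.2) >> : AM) y Z.

Definition rhdAM (Z1 Z2 : AM) : AM :=
  linext2 (fun (p1 p2 : {cmonom Mon} * Mon) =>
     am_of (<< p1.1 >> * dS p1.2 << p2.1 >>) << p2.2 >>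
     + am_of << mulcm p1.1 p2.1 >> (<< p1.2 >> * deriv << p2.2 >>)) Z1 Z2.

Definition anchorAM (Z : AM) (y : SM) : SM :=
  linext2 (fun (p : {cmonom Mon} * Mon) (mu : {cmonom Mon}) =>
     << p.1 >> * dS p.2 << mu >>) Z y.

Definition fmon (g : dgraph C) : Mon :=
  \big[@mulcm _/@onecm _]_(v : 'I_(tag g)) ucm (gdeco g v, fert g v).

Definition PhiTree (t : Tree C) : Mon := fmon (repr (val t)).
Definition PhiAroma (a : Aroma C) : Mon := fmon (repr (val a)).

Definition PhiA (a : MA C K) : SM :=
  linext (fun m : {cmonom Aroma C} =>
    \prod_(al <- finsupp m) << ucm (PhiAroma al) >> ^+ (m al)) a.

Definition PhiAT (X : AT C K) : AM :=
  linext (fun p : {cmonom Aroma C} * Tree C =>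
    am_of (PhiA << p.1 >>) << PhiTree p.2 >>) X.

End MultiIndex.

(* Main.v *)
Require Import Defs.
From HB Require Import structures.
From mathcomp Require Import all_boot all_algebra.
From mathcomp Require Import finmap generic_quotient.
From mathcomp.multinomials Require Import monalg.
Set Implicit Arguments.
Unset Strict Implicit.
Unset Printing Implicit Defensive.
Import GRing.Theory.
Local Open Scope ring_scope.

Section Lin.
Variable K : fieldType.

Definition lin (T : choiceType) (V : lmodType K) (phi : {malg K[T]} -> V) :=
  forall c x y, phi (c *: x + y) = c *: phi x + phi y.

Section LinT.
Variables (T : choiceType) (V : lmodType K).
Implicit Types (phi psi : {malg K[T]} -> V).

Lemma lin0 phi : lin phi -> phi 0 = 0.
Proof.
by move=> L; have := L (-1) 0 0; rewrite scaler0 addr0 scaleN1r addNr.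
Qed.
Lemma linD phi : lin phi -> forall x y, phi (x + y) = phi x + phi y.
Proof. by move=> L x y; have := L 1 x y; rewrite !scale1r. Qed.
Lemma linZ phi : lin phi -> forall c x, phi (c *: x) = c *: phi x.
Proof. by move=> L c x; rewrite -[c *: x]addr0 L lin0 // addr0. Qed.
Lemma lin_sum phi (I : Type) (r : seq I) (P : pred I) F : lin phi ->
  phi (\sum_(i <- r | P i) F i) = \sum_(i <- r | P i) phi (F i).
Proof. by move=> L; rewrite (big_morph phi (linD L) (lin0 L)). Qed.

Lemma malgU_scale (c : K) (k : T) : << c *g k >> = c *: (<< k >> : {malg K[T]}).
Proof. by apply/malgP=> l; rewrite mcoeffZ !mcoeffU mulr_natr. Qed.

Lemma malg_decomp (x : {malg K[T]}) : x = \sum_(k <- msupp x) x@_k *: << k >>.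
Proof. by rewrite {1}[x]monalgE; apply: eq_bigr => k _; rewrite malgU_scale. Qed.

Lemma lin_linext (f : T -> V) : lin (linext f).
Proof.
move=> c x y; rewrite /linext.
have Hs (z : {malg K[T]}) (d : {fset T}) : (msupp z `<=` d)%fset ->
   \sum_(k <- msupp z) z@_k *: f k = \sum_(k <- d) z@_k *: f k.
  move=> le; apply: big_fset_incl => // k _ /mcoeff_outdom ->; by rewrite scale0r.
set d := (msupp x `|` msupp y)%fset.
have l1 : (msupp (c *: x + y) `<=` d)%fset.
  apply: fsubset_trans (msuppD_le _ _) _; apply: fsetSU; exact: msuppZ_le.
rewrite (Hs _ _ l1) (Hs x d (fsubsetUl _ _)) (Hs y d (fsubsetUr _ _)).
rewrite scaler_sumr -big_split /=; apply: eq_bigr => k _.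
by rewrite mcoeffD mcoeffZ scalerDl scalerA.
Qed.

Lemma linextU (f : T -> V) k : linext f << k >> = f k.
Proof. by rewrite /linext msuppU oner_eq0 big_seq_fset1 mcoeffUU scale1r. Qed.

Lemma lin_eq_linext phi : lin phi -> forall x, phi x = linext (fun k => phi << k >>) x.
Proof.
move=> L x; rewrite {1}[x]malg_decomp lin_sum //.
by apply: eq_bigr => k _; rewrite linZ.
Qed.

Lemma lin_ext phi psi : lin phi -> lin psi -> (forall k, phi << k >> = psi << k >>) ->
  forall x, phi x = psi x.
Proof.
move=> L1 L2 E x; rewrite lin_eq_linext // [RHS]lin_eq_linext //.
by rewrite /linext; apply: eq_bigr => k _; rewrite E.
Qed.

Lemma linext_eq (f g : T -> V) x : (forall k, f k = g k) -> linext f x = linext g x.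
Proof. by move=> E; rewrite /linext; apply: eq_bigr => k _; rewrite E. Qed.

Lemma linext_fun (f g : T -> V) c x :
  linext (fun k => c *: f k + g k) x = c *: linext f x + linext g x.
Proof.
rewrite /linext scaler_sumr -big_split /=; apply: eq_bigr => k _.
by rewrite scalerDr !scalerA mulrC.
Qed.

Lemma lin_comp (W : lmodType K) (g : V -> W) phi :
  (forall c u v, g (c *: u + v) = c *: g u + g v) -> lin phi -> lin (fun x => g (phi x)).
Proof. by move=> G L c x y; rewrite L G. Qed.
End LinT.

Lemma linext2E (T U : choiceType) (V : lmodType K) (f : T -> U -> V) x y :
  linext2 f x y = linext (fun k => linext (f k) y) x.
Proof.
rewrite /linext2 /linext; apply: eq_bigr => k _; rewrite scaler_sumr.
by apply: eq_bigr => l _; rewrite scalerA.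
Qed.

Lemma lin_linext2l (T U : choiceType) (V : lmodType K) (f : T -> U -> V) y :
  lin (fun x => linext2 f x y).
Proof. by move=> c x x'; rewrite !linext2E lin_linext. Qed.

Lemma lin_linext2r (T U : choiceType) (V : lmodType K) (f : T -> U -> V) x :
  lin (linext2 f x).
Proof.
move=> c y y'; rewrite !linext2E -linext_fun; apply: linext_eq => k.
by rewrite lin_linext.
Qed.

Lemma linext2U (T U : choiceType) (V : lmodType K) (f : T -> U -> V) k l :
  linext2 f << k >> << l >> = f k l.
Proof. by rewrite linext2E !linextU. Qed.

End Lin.

HB.instance Definition mulcm_law (I : choiceType) :=
  Monoid.isComLaw.Build (cmonom I) (@onecm I) (@mulcm I) (@mulcmA I) (@mulcmC I) (@mul0cm I).

Section CM.
Variable I : choiceType.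

Definition cm (s : seq I) : {cmonom I} := \big[@mulcm I/@onecm I]_(x <- s) ucm x.

Lemma cmE s a : cm s a = count_mem a s.
Proof.
elim: s => [|x s IH]; first by rewrite /cm big_nil onecmE.
by rewrite /cm big_cons mulcmE ucmE -/(cm s) IH.
Qed.

Lemma cm_cat s1 s2 : cm (s1 ++ s2) = mulcm (cm s1) (cm s2).
Proof. by rewrite /cm big_cat. Qed.

Lemma cm_perm s1 s2 : perm_eq s1 s2 -> cm s1 = cm s2.
Proof. by move=> P; rewrite /cm (perm_big _ P). Qed.

Lemma cm_cons x s : cm (x :: s) = mulcm (ucm x) (cm s).
Proof. by rewrite /cm big_cons. Qed.

Lemma cm_nil : cm [::] = @onecm I.
Proof. by rewrite /cm big_nil. Qed.

Lemma cm_exists (m : {cmonom I}) : exists s, m = cm s.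
Proof.
exists (flatten [seq nseq (m b) b | b <- finsupp m]).
apply/eqP/cmP => a; rewrite cmE count_flatten sumnE !big_map.
under eq_bigr => b _ do rewrite count_nseq /=.
case: (boolP (a \in finsupp m)) => Ha.
  rewrite (bigD1_seq a) //= ?fset_uniq // eqxx mul1n big1 ?addn0 //.
  by move=> b /negbTE; rewrite eq_sym => ->.
rewrite big1_seq; first by move: Ha; rewrite -cmE_neq0 negbK => /eqP.
by move=> b /andP[_ Hb]; case: eqP => // E; move: Ha; rewrite -E Hb.
Qed.

Lemma divcm_mulU (x : I) (N : {cmonom I}) : divcm (mulcm (ucm x) N) (ucm x) = N.
Proof. by apply/eqP/cmP => a; rewrite divcmE mulcmE addKn. Qed.

Lemma mulU_inj (x : I) (A B : {cmonom I}) : mulcm (ucm x) A = mulcm (ucm x) B -> A = B.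
Proof. by move=> E; rewrite -(divcm_mulU x A) E divcm_mulU. Qed.

Lemma cm_rem (x : I) s : x \in s -> cm s = mulcm (ucm x) (cm (rem x s)).
Proof. by move=> xs; rewrite (cm_perm (perm_to_rem xs)) cm_cons. Qed.

Lemma divcm_cm (x : I) s : x \in s -> divcm (cm s) (ucm x) = cm (rem x s).
Proof. by move=> xs; rewrite (cm_rem xs) divcm_mulU. Qed.

Lemma cm_rem_map (J : choiceType) (f : J -> I) x s : x \in s ->
  cm (rem (f x) (map f s)) = cm (map f (rem x s)).
Proof.
move=> xs; apply: (@mulU_inj (f x)).
rewrite -cm_rem ?map_f // -cm_cons; apply: cm_perm.
by rewrite -map_cons; apply: perm_map; apply: perm_to_rem.
Qed.

Lemma sum_cm (V : zmodType) (F : I -> V) s :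
  \sum_(a <- finsupp (cm s)) F a *+ cm s a = \sum_(x <- s) F x.
Proof.
rewrite -[RHS]big_undup_iterop_count.
have P : perm_eq (finsupp (cm s)) (undup s).
  apply: uniq_perm; rewrite ?fset_uniq ?undup_uniq // => a.
  rewrite mem_undup -cmE_neq0 cmE; apply/idP/idP.
    by apply: contraR => /count_memPn ->.
  by move=> H; apply/negP => /eqP/count_memPn; rewrite H.
rewrite (perm_big _ P) /=; apply: eq_bigr => a _.
rewrite cmE Monoid.Theory.iteropE; elim: (count_mem a s) => [|n IH] //=.
by rewrite mulrS IH.
Qed.

Lemma sum_cm_rem (V : zmodType) (F : {cmonom I} -> I -> V) s :
  \sum_(a <- finsupp (cm s)) F (divcm (cm s) (ucm a)) a *+ cm s a
  = \sum_(x <- s) F (cm (rem x s)) x.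
Proof.
rewrite (sum_cm (fun a => F (divcm (cm s) (ucm a)) a)) big_seq [RHS]big_seq.
by apply: eq_bigr => x xs; rewrite divcm_cm.
Qed.

End CM.

Lemma connect_homo (T T' : finType) (e : rel T) (e' : rel T') (h : T -> T') :
  (forall a b, e a b -> e' (h a) (h b)) ->
  forall x y, connect e x y -> connect e' (h x) (h y).
Proof.
move=> H x y /connectP [p pth ->]; elim: p x pth => [|z p IH] x /=.
  by move=> _; apply: connect0.
by case/andP => exz pth; apply: connect_trans (connect1 (H _ _ exz)) (IH _ pth).
Qed.

Lemma card_sum (T : finType) (P : pred T) : #|[pred u | P u]| = (\sum_(u | P u) 1)%N.
Proof. by rewrite -sum1_card. Qed.

Lemma card_split n m (P : pred 'I_(n + m)) :
  #|[pred k | P k]| = (#|[pred i | P (lshift m i)]| + #|[pred j | P (rshift n j)]|)%N.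
Proof. by rewrite !card_sum big_split_ord. Qed.

Lemma split_l n m (i : 'I_n) : split (lshift m i) = inl i.
Proof. exact: (unsplitK (inl i)). Qed.
Lemma split_r n m (j : 'I_m) : split (rshift n j) = inr j.
Proof. exact: (unsplitK (inr j)). Qed.

Lemma lr_neq n m (i : 'I_n) (j : 'I_m) : (lshift m i == rshift n j) = false.
Proof. apply/negbTE/negP => /eqP/(congr1 val) /= E; have := ltn_ord i; rewrite E; by rewrite ltnNge leq_addr. Qed.

Section Graft.
Variable C : finType.
Implicit Types (g t x : dgraph C).

Definition nroots g := #|[pred u | gsucc g u == None]|.

Section G.
Variables (t x : dgraph C) (v : 'I_(tag x)).
Local Notation G := (graft_at t v).
Local Notation n := (tag t).
Local Notation m := (tag x).

Lemma gsuccGl (i : 'I_n) : gsucc G (lshift m i) =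
  Some (if gsucc t i is Some j then lshift m j else rshift n v).
Proof. by rewrite /gsucc /= ffunE split_l. Qed.
Lemma gsuccGr (j : 'I_m) : gsucc G (rshift n j) = omap (@rshift n m) (gsucc x j).
Proof. by rewrite /gsucc /= ffunE split_r. Qed.
Lemma gdecoGl (i : 'I_n) : gdeco G (lshift m i) = gdeco t i.
Proof. by rewrite /gdeco /= ffunE split_l. Qed.
Lemma gdecoGr (j : 'I_m) : gdeco G (rshift n j) = gdeco x j.
Proof. by rewrite /gdeco /= ffunE split_r. Qed.

Lemma fertGl (i : 'I_n) : fert G (lshift m i) = fert t i.
Proof.
rewrite /fert card_split.
have -> : #|[pred j | gsucc G (rshift n j) == Some (lshift m i)]| = 0%N.
  apply: eq_card0 => j; rewrite !inE gsuccGr; case: (gsucc x j) => //= a.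
  by rewrite eq_sym /eq_op /= lr_neq.
rewrite addn0; apply: eq_card => u; rewrite !inE gsuccGl.
case: (gsucc t u) => [a|] /=.
  by rewrite [LHS]/eq_op [RHS]/eq_op /= (inj_eq (@lshift_inj _ _)).
by rewrite [LHS]/eq_op /= eq_sym lr_neq.
Qed.

Lemma fertGr (j : 'I_m) : fert G (rshift n j) = ((v == j) * nroots t + fert x j)%N.
Proof.
rewrite /fert card_split /nroots; congr (_ + _)%N.
  case: eqP => [<-|ne]; rewrite ?mul1n ?mul0n.
    apply: eq_card => u; rewrite !inE gsuccGl; case: (gsucc t u) => [a|] /=.
      by rewrite [LHS]/eq_op /= lr_neq.
    by rewrite [LHS]/eq_op /= eqxx.
  apply: eq_card0 => u; rewrite !inE gsuccGl; case: (gsucc t u) => [a|] /=.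
    by rewrite [LHS]/eq_op /= lr_neq.
  rewrite [LHS]/eq_op /= (inj_eq (@rshift_inj _ _)); by apply/eqP.
apply: eq_card => u; rewrite !inE gsuccGr; case: (gsucc x u) => [a|] //=.
by rewrite [LHS]/eq_op [RHS]/eq_op /= (inj_eq (@rshift_inj _ _)).
Qed.

Lemma nrootsG : nroots G = nroots x.
Proof.
rewrite /nroots card_split.
have -> : #|[pred i | gsucc G (lshift m i) == None]| = 0%N.
  by apply: eq_card0 => i; rewrite !inE gsuccGl.
by rewrite add0n; apply: eq_card => j; rewrite !inE gsuccGr; case: (gsucc x j).
Qed.

Lemma gadjGl a b : gadj a b -> @gadj _ G (lshift m a) (lshift m b).
Proof.
rewrite /gadj !gsuccGl => /orP[] /eqP ->; apply/orP; [left|right]; exact: eqxx.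
Qed.
Lemma gadjGr a b : gadj a b -> @gadj _ G (rshift n a) (rshift n b).
Proof.
rewrite /gadj !gsuccGr => /orP[] /eqP ->; apply/orP; [left|right]; exact: eqxx.
Qed.

Lemma gadj_sym g : symmetric (@gadj _ g).
Proof. by move=> a b; rewrite /gadj orbC. Qed.

Lemma connectedG : nroots t = 1%N -> gconnected t -> gconnected x -> gconnected G.
Proof.
move=> rt ct cx.
have [r Hr] : exists r, gsucc t r == None.
  have : (0 < nroots t)%N by rewrite rt.
  by rewrite /nroots => /card_gt0P [r Hr]; exists r.
have toz k : connect (@gadj _ G) k (rshift n v).
  case: (split_ordP k) => [i|j] -> .
    have ci : connect (@gadj _ G) (lshift m i) (lshift m r).
      by apply: (connect_homo gadjGl); move/forallP: ct => /(_ i)/forallP/(_ r).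
    apply: connect_trans ci (connect1 _).
    by rewrite /gadj gsuccGl (eqP Hr) eqxx.
  apply: (connect_homo gadjGr); by move/forallP: cx => /(_ j)/forallP/(_ v).
apply/forallP => a; apply/forallP => b.
apply: connect_trans (toz a) _.
by rewrite (sym_connect_sym (@gadj_sym G)) toz.
Qed.

End G.
End Graft.

Section Graft2.
Variable C : finType.

Lemma istreeG (t x : dgraph C) (v : 'I_(tag x)) :
  istree t -> istree x -> istree (graft_at t v).
Proof.
case/andP => /eqP rt ct /andP [/eqP rx cx]; apply/andP; split.
  by have := nrootsG t v; rewrite /nroots => ->; rewrite rx.
exact: connectedG.
Qed.

Lemma isaromaG (t x : dgraph C) (v : 'I_(tag x)) :
  istree t -> isaroma x -> isaroma (graft_at t v).
Proof.
case/andP => /eqP rt ct /and3P [px /forallP sx cx]; apply/and3P; split.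
- by rewrite /= (leq_trans px) // leq_addl.
- apply/forallP => k; case: (split_ordP k) => [i|j] ->; first by rewrite gsuccGl.
  by rewrite gsuccGr; move: (sx j); case: (gsucc x j).
- exact: connectedG.
Qed.
End Graft2.

Local Open Scope quotient_scope.

Lemma card_bij (T T' : finType) (f : T -> T') (P : pred T') : bijective f ->
  #|[pred u | P u]| = #|[pred u | P (f u)]|.
Proof. by move=> bf; rewrite !card_sum (reindex f) //; apply: onW_bij. Qed.

Section Iso.
Variable C : finType.
Implicit Types (g h : dgraph C).

Lemma giso_elim g h : giso g h -> exists f : 'I_(tag g) -> 'I_(tag h),
  [/\ bijective f, (tag g = tag h),
      (forall i, gsucc h (f i) = omap f (gsucc g i)) &
      (forall i, gdeco h (f i) = gdeco g i)].
Proof.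
move=> /existsP[f /and3P[/injectiveP fi /eqP e /forallP hf]].
have cf : (#|'I_(tag h)| <= #|'I_(tag g)|)%N by rewrite !card_ord e.
exists f; split => //; first exact: inj_card_bij.
  by move=> i; rewrite /gsucc (eqP (hf i)).
by move=> i; rewrite /gdeco (eqP (hf i)).
Qed.

Lemma omap_eqSome (T T' : eqType) (f : T -> T') (o : option T) a :
  injective f -> (omap f o == Some (f a)) = (o == Some a).
Proof.
move=> fi; case: o => [b|] //=.
by rewrite [LHS]/eq_op [RHS]/eq_op /= (inj_eq fi).
Qed.

Lemma iso_imp g h : giso g h ->
  [/\ fmon h = fmon g, nroots h = nroots g,
      gconnected g -> gconnected h & isaroma g -> isaroma h].
Proof.
case/giso_elim => f [bf e hs hd].
have fi := bij_inj bf.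
have [f' fK f'K] := bf.
have fert_f i : fert h (f i) = fert g i.
  rewrite /fert (card_bij _ bf); apply: eq_card => u; rewrite !inE hs.
  exact: omap_eqSome.
have adj a b : gadj a b -> @gadj _ h (f a) (f b).
  by rewrite /gadj !hs !omap_eqSome.
have cimp : gconnected g -> gconnected h.
  move=> /forallP cg; apply/forallP => a; apply/forallP => b.
  rewrite -(f'K a) -(f'K b); apply: (connect_homo adj).
  by move/forallP: (cg (f' a)) => /(_ (f' b)).
split => //.
- rewrite /fmon (reindex f) /=; last exact: onW_bij.
  by apply: eq_bigr => i _; rewrite hd fert_f.
- rewrite /nroots (card_bij _ bf); apply: eq_card => u; rewrite !inE hs.
  by case: (gsucc g u).
- case/and3P => p0 /forallP sv cg; apply/and3P; split.
  + by rewrite -e.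
  + apply/forallP => a; rewrite -(f'K a) hs; move: (sv (f' a)).
    by case: (gsucc g (f' a)).
  + exact: cimp.
Qed.

Lemma iso_fmon g h : giso g h -> fmon h = fmon g.
Proof. by case/iso_imp. Qed.

Lemma iso_istree g h : giso g h -> istree g -> istree h.
Proof.
case/iso_imp => _ r c _ /andP[r1 cg]; apply/andP; split; last exact: c.
by move: r1; rewrite -/(nroots g) -/(nroots h) r.
Qed.

Lemma iso_isaroma g h : giso g h -> isaroma g -> isaroma h.
Proof. by case/iso_imp. Qed.

Lemma repr_pi_iso g : giso g (repr (\pi_(graphc C) g)).
Proof.
have H : repr (\pi_(graphc C) g) == g %[mod graphc C] by rewrite reprK.
by move: H; rewrite eqquotE giso_sym.
Qed.

End Iso.

Local Open Scope quotient_scope.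

Lemma malgUM (K : fieldType) (I : choiceType) (a b : {cmonom I}) :
  (<< a >> : {malg K[{cmonom I}]}) * << b >> = << mulcm a b >>.
Proof. by rewrite malgM_def fgmulUU mulr1. Qed.

Lemma malg1U (K : fieldType) (I : choiceType) :
  (1 : {malg K[{cmonom I}]}) = << @onecm I >>.
Proof. by []. Qed.

Section Fm.
Variable C : finType.
Variable K : fieldType.

Definition wv (g : dgraph C) (j : 'I_(tag g)) : C * nat := (gdeco g j, fert g j).

Lemma fmon_cm (g : dgraph C) : fmon g = cm (map (@wv g) (index_enum 'I_(tag g))).
Proof. by rewrite /fmon /cm big_map. Qed.

Lemma fmonG (t x : dgraph C) (v : 'I_(tag x)) : nroots t = 1%N ->
  fmon (graft_at t v) = mulcm (fmon t)
     (mulcm (ucm (gdeco x v, (fert x v).+1))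
            (cm (map (@wv x) (rem v (index_enum 'I_(tag x)))))).
Proof.
move=> rt; rewrite {1}/fmon big_split_ord /=; congr mulcm.
  by apply: eq_bigr => i _; rewrite gdecoGl fertGl.
set E := index_enum _.
have vE : v \in E by rewrite mem_index_enum.
have uE : uniq E by apply: index_enum_uniq.
transitivity (cm (map (fun j => (gdeco x j, ((v == j) + fert x j)%N)) E)).
  by rewrite /cm big_map; apply: eq_bigr => j _; rewrite gdecoGr fertGr rt muln1.
rewrite (cm_perm (perm_map _ (perm_to_rem vE))) /= cm_cons eqxx add1n; congr mulcm.
congr cm; apply/eq_in_map => j; rewrite mem_rem_uniq // inE => /andP[nj _].
by rewrite /wv eq_sym (negbTE nj).
Qed.

Lemma deriv_cm (s : seq (C * nat)) :
  Defs.deriv (<< cm s >> : Npoly C K) =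
  \sum_(y <- s) << mulcm (cm (rem y s)) (ucm (y.1, y.2.+1)) >>.
Proof.
rewrite /Defs.deriv linextU /dmon.
under eq_bigr => i _ do rewrite scaler_nat.
pose F := fun (N : {cmonom (C * nat)%type}) (i : (C * nat)%type) => (<< mulcm N (ucm (i.1, i.2.+1)) >> : Npoly C K).
have := @sum_cm_rem _ (Npoly C K) F s; rewrite /F; exact.
Qed.


Lemma graft_sum (t x : dgraph C) : nroots t = 1%N ->
  \sum_(v : 'I_(tag x)) (<< fmon (graft_at t v) >> : Npoly C K)
  = << fmon t >> * Defs.deriv << fmon x >>.
Proof.
move=> rt; rewrite [fmon x]fmon_cm deriv_cm big_map mulr_sumr.
apply: eq_bigr => v _; rewrite malgUM (@fmonG t x v rt).
have E2 := @cm_rem_map _ _ (@wv x) v (index_enum _) (mem_index_enum v).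
by congr (<< mulcm _ _ >>); rewrite E2 mulcmC.
Qed.
End Fm.

Local Open Scope quotient_scope.

Lemma prod_cm (I : choiceType) (R : comRingType) (F : I -> R) s :
  \prod_(a <- finsupp (cm s)) F a ^+ cm s a = \prod_(x <- s) F x.
Proof.
rewrite -[RHS]big_undup_iterop_count.
have P : perm_eq (finsupp (cm s)) (undup s).
  apply: uniq_perm; rewrite ?fset_uniq ?undup_uniq // => a.
  rewrite mem_undup -cmE_neq0 cmE; apply/idP/idP.
    by apply: contraR => /count_memPn ->.
  by move=> H; apply/negP => /eqP/count_memPn; rewrite H.
rewrite (perm_big _ P) /=; apply: eq_bigr => a _.
rewrite cmE Monoid.Theory.iteropE; elim: (count_mem a s) => [|n IH] //=.
by rewrite exprS IH.
Qed.

Lemma prodU_cm (K : fieldType) (I : choiceType) (s : seq I) :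
  \prod_(x <- s) (<< ucm x >> : {malg K[{cmonom I}]}) = << cm s >>.
Proof.
elim: s => [|x s IH]; first by rewrite big_nil cm_nil.
rewrite big_cons IH cm_cons; exact: (malgUM K (ucm x) (cm s)).
Qed.

Lemma lin_add (K : fieldType) (T : choiceType) (V : lmodType K) (phi psi : {malg K[T]} -> V) :
  lin phi -> lin psi -> lin (fun x => phi x + psi x).
Proof.
move=> L1 L2 c x y; rewrite L1 L2 scalerDr.
by rewrite -!addrA; congr (_ + _); rewrite addrCA.
Qed.

Lemma lin_mulr (K : fieldType) (I : choiceType) (a : {malg K[{cmonom I}]}) :
  forall c u v, a * (c *: u + v) = c *: (a * u) + a * v.
Proof. by move=> c u v; rewrite mulrDr scalerAr. Qed.

Lemma lin_mull (K : fieldType) (I : choiceType) (a : {malg K[{cmonom I}]}) :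
  forall c u v, (c *: u + v) * a = c *: (u * a) + v * a.
Proof. by move=> c u v; rewrite mulrDl scalerAl. Qed.

Section Phi.
Variable C : finType.
Variable K : fieldType.

Definition PT (x : {malg K[Tree C]}) : Npoly C K := linext (fun t => << PhiTree t >>) x.
Definition PR (x : {malg K[Aroma C]}) : Npoly C K := linext (fun a => << PhiAroma a >>) x.

Lemma PT_tree_cls (g : dgraph C) : istree g -> PT (tree_cls K g) = << fmon g >>.
Proof.
move=> tg; have iso := repr_pi_iso g.
rewrite /tree_cls; case: insubP => [u _ Hu|]; last by rewrite (iso_istree iso tg).
by rewrite /PT linextU /PhiTree Hu (iso_fmon iso).
Qed.

Lemma PR_aroma_cls (g : dgraph C) : isaroma g -> PR (aroma_cls K g) = << fmon g >>.
Proof.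
move=> tg; have iso := repr_pi_iso g.
rewrite /aroma_cls; case: insubP => [u _ Hu|]; last by rewrite (iso_isaroma iso tg).
by rewrite /PR linextU /PhiAroma Hu (iso_fmon iso).
Qed.

Lemma nroots_tree (g : dgraph C) : istree g -> nroots g = 1%N.
Proof. by case/andP => /eqP. Qed.

Lemma PT_graft_tt (t1 t2 : Tree C) :
  PT (graft_tt K t1 t2) = << PhiTree t1 >> * Defs.deriv << PhiTree t2 >>.
Proof.
rewrite /graft_tt /PT lin_sum; last exact: lin_linext.
rewrite -(graft_sum K _ (nroots_tree (valP t1))).
apply: eq_bigr => v _; rewrite -/(PT _) PT_tree_cls //.
exact: istreeG (valP t1) (valP t2).
Qed.

Lemma PR_graft_ta (t : Tree C) (a : Aroma C) :
  PR (graft_ta K t a) = << PhiTree t >> * Defs.deriv << PhiAroma a >>.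
Proof.
rewrite /graft_ta /PR lin_sum; last exact: lin_linext.
rewrite -(graft_sum K _ (nroots_tree (valP t))).
apply: eq_bigr => v _; rewrite -/(PR _) PR_aroma_cls //.
exact: isaromaG (valP t) (valP a).
Qed.

End Phi.

Section PhiA.
Variable C : finType.
Variable K : fieldType.

Lemma lin_PhiA : lin (@PhiA C K).
Proof. exact: lin_linext. Qed.

Lemma PhiA_cm (s : seq (Aroma C)) :
  PhiA (<< cm s >> : MA C K) = << cm (map (@PhiAroma C) s) >>.
Proof.
rewrite /PhiA linextU prod_cm -prodU_cm big_map.
by [].
Qed.

Lemma PhiA_1 : PhiA (1 : MA C K) = 1.
Proof. by rewrite malg1U -cm_nil PhiA_cm /= cm_nil. Qed.

Lemma PhiA_mul_cm (s s' : seq (Aroma C)) :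
  PhiA ((<< cm s >> : MA C K) * << cm s' >>) = PhiA (<< cm s >> : MA C K) * PhiA (<< cm s' >> : MA C K).
Proof.
have E : (<< cm s >> : MA C K) * << cm s' >> = << cm (s ++ s') >>.
  by rewrite cm_cat; exact: (malgUM K (cm s) (cm s')).
rewrite E; apply: (etrans (PhiA_cm (s ++ s'))).
rewrite map_cat cm_cat -(malgUM K (cm (map (@PhiAroma C) s)) (cm (map (@PhiAroma C) s'))).
by congr (_ * _); symmetry; apply: PhiA_cm.
Qed.

Lemma PhiA_mul (a b : MA C K) : PhiA (a * b) = PhiA a * PhiA b.
Proof.
move: a; apply: lin_ext.
- exact: (lin_comp (g := @PhiA C K) (phi := fun a => a * b) lin_PhiA (lin_mull b)).
- exact: (lin_comp (g := fun y => y * PhiA b) (lin_mull _) lin_PhiA).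
move=> m; move: b; apply: lin_ext.
- exact: (lin_comp (g := @PhiA C K) (phi := fun b => << m >> * b) lin_PhiA (lin_mulr _)).
- exact: (lin_comp (g := fun y => PhiA << m >> * y) (lin_mulr _) lin_PhiA).
move=> m'; have [s ->] := cm_exists m; have [s' ->] := cm_exists m'.
exact: PhiA_mul_cm.
Qed.
End PhiA.

Lemma cm_single (I : choiceType) (x : I) : cm [:: x] = ucm x.
Proof. by rewrite cm_cons cm_nil mulcm0. Qed.

Section H.
Variable C : finType.
Variable K : fieldType.

Lemma PhiA_U1 (a : Aroma C) : PhiA (<< ucm a >> : MA C K) = << ucm (PhiAroma a) >>.
Proof. have E := PhiA_cm K [:: a]; rewrite /= !cm_single in E; exact: E. Qed.

Lemma PhiA_liftA (y : {malg K[Aroma C]}) : PhiA (liftA y) = emb1 (PR y).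
Proof.
move: y; apply: lin_ext.
- move=> c u v; rewrite /liftA (lin_linext _ c u v); exact: lin_PhiA.
- apply: (lin_comp (g := @emb1 C K) (phi := @PR C K)); [exact: lin_linext | exact: lin_linext].
move=> a; rewrite /liftA linextU PhiA_U1 /PR linextU /emb1 linextU.
by [].
Qed.

Lemma graft_tA_cm (t : Tree C) (s : seq (Aroma C)) :
  graft_tA t (<< cm s >> : MA C K) =
  \sum_(x <- s) << cm (rem x s) >> * liftA (graft_ta K t x).
Proof.
rewrite /graft_tA linextU; under eq_bigr => i _ do rewrite scaler_nat.
pose F := fun (N : {cmonom (Aroma C)}) (al : Aroma C) =>
   (<< N >> : MA C K) * liftA (graft_ta K t al).
have := @sum_cm_rem _ (MA C K) F s; rewrite /F; exact.
Qed.

Lemma dS_cm (k : Mon C) (r : seq (Mon C)) :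
  dS k (<< cm r >> : SM C K) =
  \sum_(y <- r) << cm (rem y r) >> * emb1 (<< k >> * Defs.deriv << y >>).
Proof.
rewrite /dS linextU; under eq_bigr => i _ do rewrite scaler_nat.
pose F := fun (N : {cmonom (Mon C)}) (p : Mon C) =>
   (<< N >> : SM C K) * emb1 (<< k >> * Defs.deriv << p >>).
have := @sum_cm_rem _ (SM C K) F r; rewrite /F; exact.
Qed.

Lemma PhiA_graft_tA (t : Tree C) (a : MA C K) :
  PhiA (graft_tA t a) = dS (PhiTree t) (PhiA a).
Proof.
move: a; apply: lin_ext.
- move=> c u v; rewrite /graft_tA (lin_linext _ c u v); exact: lin_PhiA.
- apply: (lin_comp (g := @dS C K (PhiTree t)) (phi := @PhiA C K)); [exact: lin_linext | exact: lin_PhiA].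
move=> m; have [s ->] := cm_exists m.
rewrite graft_tA_cm (lin_sum _ _ _ (@lin_PhiA C K)).
apply: esym; apply: (etrans (congr1 (dS (PhiTree t)) (PhiA_cm K s))).
rewrite dS_cm big_map [RHS]big_seq [LHS]big_seq; apply: eq_bigr => x xs.
rewrite PhiA_mul (cm_rem_map _ xs); congr (_ * _); first by rewrite PhiA_cm.
by rewrite PhiA_liftA PR_graft_ta.
Qed.

End H.

Section AM.
Variable C : finType.
Variable K : fieldType.

Lemma am_ofU (mu : {cmonom (Mon C)}) (k : Mon C) :
  am_of (<< mu >> : SM C K) << k >> = << (mu, k) >>.
Proof. exact: linext2U. Qed.

Lemma lin_am_l (P : Npoly C K) : lin (fun y : SM C K => am_of y P).
Proof. exact: lin_linext2l. Qed.
Lemma lin_am_r (y : SM C K) : lin (am_of y).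
Proof. exact: lin_linext2r. Qed.

Lemma lin_dS (k : Mon C) : lin (@dS C K k).
Proof. exact: lin_linext. Qed.

Lemma rhd_am (y1 y2 : SM C K) (k1 k2 : Mon C) :
  rhdAM (am_of y1 << k1 >>) (am_of y2 << k2 >>) =
  am_of (y1 * dS k1 y2) << k2 >> + am_of (y1 * y2) (<< k1 >> * Defs.deriv << k2 >>).
Proof.
move: y1; apply: lin_ext.
- move=> c u v; rewrite (lin_am_l _ c u v); exact: lin_linext2l.
- apply: lin_add.
  + move=> c u v; rewrite mulrDl -scalerAl; exact: lin_am_l.
  + move=> c u v; rewrite mulrDl -scalerAl; exact: lin_am_l.
move=> mu1; move: y2; apply: lin_ext.
- move=> c u v; rewrite (lin_am_l _ c u v); exact: lin_linext2r.
- apply: lin_add.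
  + move=> c u v; rewrite (lin_dS k1 c u v) mulrDr -scalerAr; exact: lin_am_l.
  + move=> c u v; rewrite mulrDr -scalerAr; exact: lin_am_l.
move=> mu2; apply: (etrans (congr2 (@rhdAM C K) (am_ofU mu1 k1) (am_ofU mu2 k2))).
apply: (etrans (linext2U _ _ _)) => /=.
rewrite -(malgUM K mu1 mu2).
reflexivity.
Qed.

Lemma act_am (y1 y2 : SM C K) (P : Npoly C K) :
  actAM y1 (am_of y2 P) = am_of (y1 * y2) P.
Proof.
move: y1; apply: lin_ext.
- exact: lin_linext2l.
- move=> c u v; rewrite mulrDl -scalerAl; exact: lin_am_l.
move=> mu1; move: y2; apply: lin_ext.
- move=> c u v; rewrite (lin_am_l _ c u v); exact: lin_linext2r.
- move=> c u v; rewrite mulrDr -scalerAr; exact: lin_am_l.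
move=> mu2; move: P; apply: lin_ext.
- move=> c u v; rewrite (lin_am_r _ c u v); exact: lin_linext2r.
- exact: lin_am_r.
move=> k; rewrite (am_ofU mu2 k) /actAM linext2U /=.
rewrite (malgUM K mu1 mu2); symmetry; exact: am_ofU.
Qed.

Lemma anchor_am (y1 y : SM C K) (k : Mon C) :
  anchorAM (am_of y1 << k >>) y = y1 * dS k y.
Proof.
move: y1; apply: lin_ext.
- move=> c u v; rewrite (lin_am_l _ c u v); exact: lin_linext2l.
- move=> c u v; exact: lin_mull.
move=> mu1; move: y; apply: lin_ext.
- exact: lin_linext2r.
- move=> c u v; rewrite (lin_dS k c u v); exact: lin_mulr.
move=> mu; apply: (etrans (congr1 (fun Z => anchorAM Z << mu >>) (am_ofU mu1 k))).
exact: linext2U.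
Qed.

Lemma lin_PhiAT : lin (@PhiAT C K).
Proof. exact: lin_linext. Qed.

Lemma PhiAT_U (m : {cmonom (Aroma C)}) (t : Tree C) :
  PhiAT (<< (m, t) >> : AT C K) = am_of (PhiA (<< m >> : MA C K)) << PhiTree t >>.
Proof. by rewrite /PhiAT linextU. Qed.

Lemma PhiAT_at_of (a : MA C K) (x : {malg K[Tree C]}) :
  PhiAT (at_of a x) = am_of (PhiA a) (PT x).
Proof.
move: a; apply: lin_ext.
- move=> c u v; rewrite /at_of (lin_linext2l _ _ c u v); exact: lin_PhiAT.
- move=> c u v; rewrite (@lin_PhiA C K c u v); exact: lin_am_l.
move=> m; move: x; apply: lin_ext.
- move=> c u v; rewrite /at_of (lin_linext2r _ _ c u v); exact: lin_PhiAT.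
- move=> c u v; rewrite /PT (lin_linext _ c u v); exact: lin_am_r.
move=> t; rewrite /at_of linext2U /= PhiAT_U; congr (am_of _ _).
by rewrite /PT linextU.
Qed.

End AM.

Section Main.
Variable C : finType.
Variable K : fieldType.

Lemma PhiAT_graft (X Y : AT C K) : PhiAT (graftAT X Y) = rhdAM (PhiAT X) (PhiAT Y).
Proof.
move: X; apply: lin_ext.
- move=> c u v; rewrite /graftAT (lin_linext2l _ _ c u v); exact: lin_PhiAT.
- move=> c u v; rewrite (@lin_PhiAT C K c u v); exact: lin_linext2l.
move=> [m1 t1]; move: Y; apply: lin_ext.
- move=> c u v; rewrite /graftAT (lin_linext2r _ _ c u v); exact: lin_PhiAT.
- move=> c u v; rewrite (@lin_PhiAT C K c u v); exact: lin_linext2r.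
move=> [m2 t2].
apply: (etrans (congr1 (@PhiAT C K) (linext2U _ _ _))) => /=.
rewrite (linD (@lin_PhiAT C K)).
apply: esym; apply: (etrans (congr2 (@rhdAM C K) (PhiAT_U K m1 t1) (PhiAT_U K m2 t2))).
apply: (etrans (rhd_am _ _ _ _)); rewrite [RHS]addrC.
apply: f_equal2; apply: esym; apply: (etrans (PhiAT_at_of _ _)); apply: f_equal2.
- apply: (etrans (PhiA_mul _ _)); apply: f_equal2; first reflexivity.
  exact: PhiA_graft_tA.
- exact: linextU.
- apply: (etrans _ (PhiA_mul _ _)); apply: congr1; apply: esym; exact: (malgUM K m1 m2).
- exact: PT_graft_tt.
Qed.

Lemma PhiAT_actA (a : MA C K) (X : AT C K) : PhiAT (actA a X) = actAM (PhiA a) (PhiAT X).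
Proof.
move: a; apply: lin_ext.
- move=> c u v; rewrite /actA (lin_linext2l _ _ c u v); exact: lin_PhiAT.
- move=> c u v; rewrite (@lin_PhiA C K c u v); exact: lin_linext2l.
move=> m; move: X; apply: lin_ext.
- move=> c u v; rewrite /actA (lin_linext2r _ _ c u v); exact: lin_PhiAT.
- move=> c u v; rewrite (@lin_PhiAT C K c u v); exact: lin_linext2r.
move=> [m1 t] /=.
apply: (etrans (congr1 (@PhiAT C K) (linext2U _ _ _))) => /=.
apply: (etrans (PhiAT_U K _ _)); apply: esym.
apply: (etrans (congr1 (actAM _) (PhiAT_U K _ _))); apply: (etrans (act_am _ _ _)).
apply: f_equal2; last reflexivity.
apply: esym; apply: (etrans _ (PhiA_mul _ _)); apply: congr1; apply: esym.
exact: (malgUM K m m1).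
Qed.

Lemma PhiA_anchor (X : AT C K) (a : MA C K) :
  PhiA (anchorAT X a) = anchorAM (PhiAT X) (PhiA a).
Proof.
move: X; apply: lin_ext.
- move=> c u v; rewrite /anchorAT (lin_linext2l _ _ c u v); exact: lin_PhiA.
- move=> c u v; rewrite (@lin_PhiAT C K c u v); exact: lin_linext2l.
move=> [m1 t]; move: a; apply: lin_ext.
- move=> c u v; rewrite /anchorAT (lin_linext2r _ _ c u v); exact: lin_PhiA.
- move=> c u v; rewrite (@lin_PhiA C K c u v); exact: lin_linext2r.
move=> m.
apply: (etrans (congr1 (@PhiA C K) (linext2U _ _ _))) => /=.
apply: (etrans (PhiA_mul _ _)); apply: esym.
apply: (etrans (congr1 (fun Z => anchorAM Z _) (PhiAT_U K _ _))).
apply: (etrans (anchor_am _ _ _)).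
apply: f_equal2; first reflexivity.
apply: esym; exact: PhiA_graft_tA.
Qed.
End Main.

Local Open Scope ring_scope.

Theorem theorem3p6 (K : fieldType) (C : finType) :
  (PhiA (1 : MA C K) = 1 /\
   (forall a b : MA C K, PhiA (a * b) = PhiA a * PhiA b) /\
   (forall (c : K) (a b : MA C K), PhiA (c *: a + b) = c *: PhiA a + PhiA b)) /\
  (forall (c : K) (X Y : AT C K), PhiAT (c *: X + Y) = c *: PhiAT X + PhiAT Y) /\
  (forall X Y : AT C K, PhiAT (graftAT X Y) = rhdAM (PhiAT X) (PhiAT Y)) /\
  (forall (a : MA C K) (X : AT C K), PhiAT (actA a X) = actAM (PhiA a) (PhiAT X)) /\
  (forall (X : AT C K) (a : MA C K),
      PhiA (anchorAT X a) = anchorAM (PhiAT X) (PhiA a)).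
Proof.
split; first split; [exact: (PhiA_1 C K) | split; [exact: PhiA_mul | exact: lin_PhiA]|].
split; first exact: lin_PhiAT.
split; first exact: PhiAT_graft.
split; first exact: PhiAT_actA.
exact: PhiA_anchor.
Qed.
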